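(* Let $M\in\mathrm{rep}\,G_{m,n}$ be interval-decomposable and $I\in\mathbb{I}_{m,n}$. Then for each $\ast\in\{ss,cc,tot\}$, $$d_M(V_I)=\bar d^\ast_M(I)+\sum_{\emptyset\neq S\subseteq\mathrm{Cov}(I)}(-1)^{\#S}\,\bar d^\ast_M\Big(\bigvee S\Big).$$
   Context: Fix a field $K$. For integers $m,n\ge1$, $G_{m,n}$ is the equioriented commutative $m\times n$ grid: the quiver with vertex set $\{(i,j):1\le i\le m,\ 1\le j\le n\}$ and arrows $(i,j)\to(i,j+1)$ and $(i,j)\to(i+1,j)$, bound by all commutativity relations; $\mathrm{rep}\,G_{m,n}$ is its category of finite-dimensional representations over $K$ satisfying the relations. For an indecomposable $L$, $d_M(L)$ is the multiplicity of $L$ in a Krull–Schmidt decomposition of $M$. An interval of $G_{m,n}$ is a nonempty full subquiver $I$ which is connected (as an undirected graph) and convex (whenever $x,y\in I_0$ and there are paths $x\to z$, $z\to y$ in $G_{m,n}$, then $z\in I_0$); $\mathbb{I}_{m,n}$ is the set of intervals ordered by inclusion of vertex sets. $\mathrm{Cov}(I)$ is the set of intervals covering $I$ in this poset; for $\emptyset\ne S\subseteq\mathrm{Cov}(I)$, $\bigvee S$ is the smallest interval containing all members of $S$ (it exists; it is the join in the poset $\{J:I\le J\}$). The interval representation $V_I$ has $K$ at vertices of $I$, $0$ elsewhere, identity maps on arrows inside $I$ and zero maps otherwise; $M$ is interval-decomposable if it is isomorphic to a direct sum of interval representations. Essential vertices: $I^{ss}_0$ is the set of sources and sinks of the quiver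 $I$; $I^{cc}_0=I_0\cap(\mathrm{pr}_1(I^{ss}_0)\times\mathrm{pr}_2(I^{ss}_0))$ with $\mathrm{pr}_1,\mathrm{pr}_2$ coordinate projections; $I^{tot}_0=I_0$. Let $KG_{m,n}$ be the $K$-linear category whose objects are the vertices and whose morphisms are $K$-linear combinations of paths modulo the commutativity relations; representations are $K$-linear functors $KG_{m,n}\to\mathrm{vect}_K$. For $\ast\in\{ss,cc,tot\}$, $\mathcal{C}^\ast_I$ is the full subcategory of $KG_{m,n}$ on $I^\ast_0$, and $M^\ast_I:=M|_{\mathcal{C}^\ast_I}$. The compressed multiplicity $\bar d^\ast_M(I)$ is the multiplicity of the indecomposable $(V_I)^\ast_I$ as a direct summand of $M^\ast_I$. *)

(* Defs.v *)
From HB Require Import structures.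
From mathcomp Require Import all_boot all_order all_algebra.
From Stdlib Require Import ClassicalEpsilon.
Set Implicit Arguments. Unset Strict Implicit. Unset Printing Implicit Defensive.
Import GRing.Theory.
Local Open Scope ring_scope.

(* Vertices of the m x n grid G_{m,n}; vertex (i,j) of the paper is the pair
   of ordinals (i-1, j-1) (0-based indexing). *)
Definition vert (m n : nat) := ('I_m * 'I_n)%type.

Section Grid.
Variables m n : nat.
Implicit Types (x y z : vert m n) (I J : {set vert m n}).

(* There is a path x -> y in G_{m,n} iff x <= y componentwise;
   modulo commutativity, Hom(x,y) in K G_{m,n} is K if gle x y, 0 otherwise. *)
Definition gle x y : bool := ((x.1 <= y.1) && (x.2 <= y.2))%N.

Definition arrow x y : bool :=
  ((x.1 == y.1) && ((x.2).+1 == y.2)%N) || ((x.2 == y.2) && ((x.1).+1 == y.1)%N).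

Definition adj x y : bool := arrow x y || arrow y x.

Definition connectedb I : bool :=
  [forall x in I, forall y in I,
     connect (fun a b => [&& a \in I, b \in I & adj a b]) x y].

Definition convexb I : bool :=
  [forall x in I, forall y in I, forall z, (gle x z && gle z y) ==> (z \in I)].

Definition is_interval I : bool := [&& I != set0, connectedb I & convexb I].

Definition Cov I : {set {set vert m n}} :=
  [set J | [&& is_interval J, I \proper J &
     [forall L : {set vert m n}, ~~ [&& is_interval L, I \proper L & L \proper J]]]].

(* the smallest interval containing all members of S (exists when S is a
   nonempty subset of Cov I) *)
Definition bigjoin (S : {set {set vert m n}}) : {set vert m n} :=
  epsilon (inhabits set0) (fun J =>
    is_interval J /\ (forall L, L \in S -> L \subset J) /\
    (forall J', is_interval J' -> (forall L, L \in S -> L \subset J') -> J \subset J')).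

Definition is_source I x : bool := (x \in I) && [forall y in I, ~~ arrow y x].
Definition is_sink I x : bool := (x \in I) && [forall y in I, ~~ arrow x y].
Definition ess_ss I : {set vert m n} := [set x | is_source I x || is_sink I x].
Definition ess_cc I : {set vert m n} :=
  [set x in I | (x.1 \in [set y.1 | y in ess_ss I]) &&
                (x.2 \in [set y.2 | y in ess_ss I])].
Definition ess_tot I : {set vert m n} := I.

End Grid.

Inductive ess_kind := SS | CC | TOT.

Definition ess m n (k : ess_kind) (I : {set vert m n}) : {set vert m n} :=
  match k with SS => ess_ss I | CC => ess_cc I | TOT => ess_tot I end.

(* Data of a representation: a finite-dimensional space K^(rdim x) at each
   vertex and a matrix for each pair (x,y) (row-vector convention: v |-> v *m
   rmap x y).  Only the values on the vertex set S of a full subcategory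
   C_S of K G_{m,n} and on pairs x <= y matter. *)
Record repd (K : fieldType) (m n : nat) := Repd {
  rdim : vert m n -> nat;
  rmap : forall x y : vert m n, 'M[K]_(rdim x, rdim y) }.

Section Reps.
Variables (K : fieldType) (m n : nat) (S : {set vert m n}).

(* M is a K-linear functor C_S -> vect_K, C_S the full subcategory of K G_{m,n}
   on the vertex set S *)
Definition is_rep (M : repd K m n) : Prop :=
  (forall x, x \in S -> rmap M x x = 1%:M) /\
  (forall x y z, x \in S -> y \in S -> z \in S -> gle x y -> gle y z ->
     rmap M x z = rmap M x y *m rmap M y z).

Definition is_hom (M N : repd K m n) (g : forall x, 'M[K]_(rdim M x, rdim N x)) : Prop :=
  forall x y, x \in S -> y \in S -> gle x y ->
    rmap M x y *m g y = g x *m rmap N x y.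

Definition is_iso (M N : repd K m n) : Prop :=
  exists (g : forall x, 'M[K]_(rdim M x, rdim N x))
         (h : forall x, 'M[K]_(rdim N x, rdim M x)),
    is_hom g /\ is_hom h /\
    forall x, x \in S -> g x *m h x = 1%:M /\ h x *m g x = 1%:M.

Definition is_dsum (M : repd K m n) (k : nat) (F : 'I_k -> repd K m n) : Prop :=
  exists (iota : forall i x, 'M[K]_(rdim (F i) x, rdim M x))
         (pi : forall i x, 'M[K]_(rdim M x, rdim (F i) x)),
    (forall i, is_hom (iota i)) /\ (forall i, is_hom (pi i)) /\
    (forall x, x \in S ->
       (forall i, iota i x *m pi i x = 1%:M) /\
       (forall i j, i != j -> iota i x *m pi j x = 0) /\
       \sum_i pi i x *m iota i x = 1%:M).

Definition is_zero (M : repd K m n) : Prop := forall x, x \in S -> rdim M x = 0%N.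

Definition indecomposable (M : repd K m n) : Prop :=
  is_rep M /\ ~ is_zero M /\
  forall A B : repd K m n, is_rep A -> is_rep B ->
    is_dsum M (fun i : 'I_2 => if val i == 0%N then A else B) ->
    is_zero A \/ is_zero B.

(* multiplicity of L in a Krull-Schmidt decomposition of M (well defined by
   the Krull-Schmidt theorem; chosen by epsilon) *)
Definition mult (M L : repd K m n) : nat :=
  epsilon (inhabits 0%N) (fun c => exists (k : nat) (F : 'I_k -> repd K m n),
    (forall i, indecomposable (F i)) /\ is_dsum M F /\
    exists s : {set 'I_k}, (forall i, i \in s <-> is_iso (F i) L) /\ c = #|s|).

End Reps.

(* interval representation V_I: K on I, 0 elsewhere, identity maps inside I
   (for x, y not both in I the matrix is empty, hence zero) *)
Definition VI (K : fieldType) m n (I : {set vert m n}) : repd K m n :=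
  @Repd K m n (fun x => nat_of_bool (x \in I)) (fun x y => \matrix_(i, j) 1).

Definition interval_decomposable (K : fieldType) m n (M : repd K m n) : Prop :=
  exists (k : nat) (F : 'I_k -> repd K m n), is_dsum setT M F /\
    forall i, exists J, is_interval J /\ is_iso setT (F i) (VI K J).

(* compressed multiplicity: multiplicity of (V_I)^*_I in M^*_I = M|_{C^*_I} *)
Definition cmult (K : fieldType) m n (k : ess_kind) (M : repd K m n)
  (I : {set vert m n}) : nat := mult (ess k I) M (VI K I).

(* Main.v *)
Require Import Defs.
From HB Require Import structures.
From mathcomp Require Import all_boot all_order all_algebra.
From Stdlib Require Import ClassicalEpsilon.
From mathcomp Require Import zify.
From Stdlib Require Import Lia.
Import GRing.Theory.
Local Open Scope ring_scope.
Set Implicit Arguments. Unset Strict Implicit. Unset Printing Implicit Defensive.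

Definition decP (P : Prop) : bool := if excluded_middle_informative P then true else false.
Lemma decPP (P : Prop) : reflect P (decP P).
Proof. rewrite /decP; case: excluded_middle_informative => H; by constructor. Qed.

Section Gen.
Variables (K : fieldType) (m n : nat) (S : {set vert m n}).
Local Notation rep := (repd K m n).

Lemma hom_comp (A B C : rep) (f : forall x, 'M[K]_(rdim A x, rdim B x))
  (g : forall x, 'M[K]_(rdim B x, rdim C x)) :
  is_hom S f -> is_hom S g -> is_hom S (fun x => f x *m g x).
Proof.
move=> Hf Hg x y Hx Hy Hxy.
by rewrite mulmxA Hf // -mulmxA Hg // mulmxA.
Qed.

Lemma hom_lin (A B : rep) (r : nat) (c : 'I_r -> K) (f : 'I_r -> forall x, 'M[K]_(rdim A x, rdim B x)) :
  (forall i, is_hom S (f i)) -> is_hom S (fun x => \sum_i c i *: f i x).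
Proof.
move=> Hf x y Hx Hy Hxy.
rewrite mulmx_sumr mulmx_suml; apply: eq_bigr => i _.
by rewrite -scalemxAr -scalemxAl Hf.
Qed.

Lemma hom_id (A : rep) : is_hom S (fun x => (1%:M : 'M[K]_(rdim A x))).
Proof. by move=> x y _ _ _; rewrite mul1mx mulmx1. Qed.

Lemma hom0 (A B : rep) : is_hom S (fun x => (0 : 'M[K]_(rdim A x, rdim B x))).
Proof. by move=> x y _ _ _; rewrite mul0mx mulmx0. Qed.

Definition rsum p q (A : 'M[K]_(p, q)) : 'rV[K]_q := \row_j \sum_i A i j.
Definition csum p q (B : 'M[K]_(q, p)) : 'cV[K]_q := \col_j \sum_i B j i.

Lemma tr_one p q (A : 'M[K]_(p, q)) (B : 'M[K]_(q, p)) : p = 1%N ->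
  \tr (A *m B) = (rsum A *m csum B) 0 0.
Proof.
move=> Hp; subst p.
rewrite /mxtrace big_ord1 !mxE; apply: eq_bigr => j _.
by rewrite !mxE !big_ord1.
Qed.

Lemma one_scalar p (A : 'M[K]_p) : p = 1%N -> A = (\tr A)%:M.
Proof.
move=> Hp; subst p; apply/matrixP => i j.
by rewrite !ord1 /mxtrace big_ord1 !mxE eqxx mulr1n.
Qed.

Section PhiSec.
Variables (L : rep) (x0 : vert m n).

Definition hasD (M : rep) (r : nat) : Prop :=
  exists u : 'I_r -> forall x, 'M[K]_(rdim L x, rdim M x),
  exists w : 'I_r -> forall x, 'M[K]_(rdim M x, rdim L x),
  (forall a, is_hom S (u a)) /\ (forall b, is_hom S (w b)) /\
  (forall a b, \tr (u a x0 *m w b x0) = (a == b)%:R).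

Definition Phi (M : rep) : nat := \max_(r < (rdim M x0).+1 | decP (hasD M r)) r.

Hypothesis HL1 : rdim L x0 = 1%N.

Lemma hasD_le M r : hasD M r -> (r <= rdim M x0)%N.
Proof.
case=> u [w [Hu [Hw Huw]]].
pose U := \matrix_(a, j) (rsum (u a x0)) 0 j.
pose W := \matrix_(j, b) (csum (w b x0)) j 0.
have UW : U *m W = 1%:M.
  apply/matrixP => a b; rewrite !mxE -Huw (tr_one _ _ HL1) !mxE.
  by apply: eq_bigr => j _; rewrite !mxE.
have := mxrankM_maxl U W; rewrite UW mxrank1 => H.
exact: leq_trans H (rank_leq_col U).
Qed.

Lemma hasD0 M : hasD M 0.
Proof.
exists (fun _ x => 0), (fun _ x => 0).
split; first by move=> a; apply: hom0.
split; first by move=> a; apply: hom0.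
by case.
Qed.

Lemma Phi_ge M r : hasD M r -> (r <= Phi M)%N.
Proof.
move=> H; have Hr := hasD_le H.
have Hr' : (r < (rdim M x0).+1)%N by [].
rewrite /Phi; apply: (@leq_bigmax_cond _ _ (fun i : 'I_ _ => nat_of_ord i) (Ordinal Hr')).
by apply/decPP.
Qed.

Lemma Phi_has M : hasD M (Phi M).
Proof.
have Hc : (0 < #|[pred r : 'I_(rdim M x0).+1 | decP (hasD M r)]|)%N.
  apply/card_gt0P; exists ord0; rewrite inE; apply/decPP; exact: hasD0.
case: (eq_bigmax_cond (fun r : 'I_ _ => nat_of_ord r) Hc) => i0.
rewrite inE => /decPP Hi0.
by rewrite /Phi => ->.
Qed.

End PhiSec.
End Gen.

Section Gen2.
Variables (K : fieldType) (m n : nat) (S : {set vert m n}).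
Local Notation rep := (repd K m n).
Variables (L : rep) (x0 : vert m n).
Hypothesis HL1 : rdim L x0 = 1%N.
Hypothesis Hx0 : x0 \in S.

Lemma tr_sum p r (A : 'I_r -> 'M[K]_p) : \tr (\sum_i A i) = \sum_i \tr (A i).
Proof.
rewrite /mxtrace; under eq_bigr do rewrite summxE; exact: exchange_big.
Qed.

Lemma rank_le_Phi (M : rep) r s (u : 'I_r -> forall x, 'M[K]_(rdim L x, rdim M x))
  (w : 'I_s -> forall x, 'M[K]_(rdim M x, rdim L x)) :
  (forall a, is_hom S (u a)) -> (forall b, is_hom S (w b)) ->
  (\rank (\matrix_(a, b) \tr (u a x0 *m w b x0)) <= Phi S L x0 M)%N.
Proof.
move=> Hu Hw.
set Z := \matrix_(a, b) _.
set t := \rank Z.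
pose P : 'M[K]_(t, r) := pid_mx t *m invmx (col_ebase Z).
pose Q : 'M[K]_(s, t) := invmx (row_ebase Z) *m pid_mx t.
have PZQ : P *m Z *m Q = 1%:M.
  rewrite -{1}(mulmx_ebase Z) /P /Q.
  rewrite -!mulmxA mulKmx ?col_ebase_unit // !mulmxA mulmxK ?row_ebase_unit //.
  rewrite !mul_pid_mx.
  have htr : (t <= r)%N by apply: rank_leq_row.
  have hts : (t <= s)%N by apply: rank_leq_col.
  rewrite -(pid_mx_1 K t); congr pid_mx; lia.
apply: (Phi_ge HL1).
exists (fun c x => \sum_a P c a *: u a x), (fun d x => \sum_b Q b d *: w b x).
split; first by move=> c; apply: hom_lin.
split; first by move=> d; apply: hom_lin.
move=> c d.
have -> : ((c == d)%:R : K) = (P *m Z *m Q) c d by rewrite PZQ mxE.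
rewrite mulmx_suml tr_sum /=.
rewrite mxE; under [RHS]eq_bigr => b _ do rewrite mxE big_distrl /=.
rewrite [RHS]exchange_big /=; apply eq_bigr => a _.
rewrite -scalemxAl mxtraceZ mulmx_sumr tr_sum big_distrr /=.
apply eq_bigr => b _.
rewrite -scalemxAr mxtraceZ mxE.
rewrite mulrA mulrAC; congr (_ * _); congr (_ * _).
by rewrite /Z mxE.
Qed.

Lemma rank_sum_le k p q (Z : 'I_k -> 'M[K]_(p, q)) :
  (\rank (\sum_i Z i)%R <= \sum_i \rank (Z i))%N.
Proof.
apply: (big_ind2 (fun (A : 'M[K]_(p, q)) (k : nat) => \rank A <= k)%N); first by rewrite mxrank0.
  move=> A a B b HA HB; apply: leq_trans (mxrank_add A B) _.
  exact: leq_add.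
by [].
Qed.

End Gen2.

Section Gen3.
Variables (K : fieldType) (m n : nat) (S : {set vert m n}).
Local Notation rep := (repd K m n).
Variables (L : rep) (x0 : vert m n).
Hypothesis HL1 : rdim L x0 = 1%N.
Hypothesis Hx0 : x0 \in S.

Lemma dsum_Phi_le (M : rep) k (F : 'I_k -> rep) : is_dsum S M F ->
  (Phi S L x0 M <= \sum_i Phi S L x0 (F i))%N.
Proof.
case=> iota [pi [Hi [Hp Hx]]].
case: (Hx x0 Hx0) => H1 [H0 Hs].
case: (Phi_has S L x0 M) => u [w [Hu [Hw Huw]]].
set r := Phi S L x0 M in u w Hu Hw Huw *.
pose Z i := \matrix_(a, b) \tr ((u a x0 *m pi i x0) *m (iota i x0 *m w b x0)).
have HZ : (\sum_i Z i = 1%:M :> 'M[K]_r)%R.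
  apply/matrixP => a b; rewrite summxE mxE -Huw.
  have -> : u a x0 *m w b x0 = \sum_i (u a x0 *m pi i x0) *m (iota i x0 *m w b x0).
    rewrite -{1}(mulmx1 (u a x0)) -Hs mulmx_sumr mulmx_suml.
    by apply: eq_bigr => i _; rewrite !mulmxA.
  by rewrite tr_sum; apply: eq_bigr => i _; rewrite mxE.
have := rank_sum_le Z; rewrite HZ mxrank1 => H.
apply: leq_trans H _; apply: leq_sum => i _.
apply: (rank_le_Phi HL1 Hx0 (u := fun a x => u a x *m pi i x) (w := fun b x => iota i x *m w b x)).
  by move=> a; apply: hom_comp.
by move=> b; apply: hom_comp.
Qed.

Lemma dsum_Phi_ge (M : rep) k (F : 'I_k -> rep) : is_dsum S M F ->
  (\sum_i Phi S L x0 (F i) <= Phi S L x0 M)%N.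
Proof.
case=> iota [pi [Hi [Hp Hx]]].
case: (Hx x0 Hx0) => H1 [H0 Hs].
pose G i := constructive_indefinite_description _ (Phi_has S L x0 (F i)).
pose uu i := proj1_sig (G i).
pose Gw i := constructive_indefinite_description _ (proj2_sig (G i)).
pose ww i := proj1_sig (Gw i).
have Huw i := proj2_sig (Gw i).
pose T := {i : 'I_k & 'I_(Phi S L x0 (F i))}.
pose U (t : T) := fun x => uu (tag t) (tagged t) x *m iota (tag t) x.
pose W (t : T) := fun x => pi (tag t) x *m ww (tag t) (tagged t) x.
have HUW t t' : \tr (U t x0 *m W t' x0) = (t == t')%:R.
  case: t => i a; case: t' => j b; rewrite /U /W /=.
  case: (eqVneq i j) => [e|ne].
    subst j.
    rewrite mulmxA -(mulmxA _ (iota i x0)) H1 mulmx1.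
    case: (Huw i) => _ [_ ->].
    by rewrite eq_Tagged.
  rewrite mulmxA -(mulmxA _ (iota i x0)) H0 // mulmx0 mul0mx.
  rewrite mxtrace0.
  suff -> : (Tagged (fun i0 => 'I_(Phi S L x0 (F i0))) a == Tagged _ b) = false by [].
  apply/negbTE; apply/negP => /eqP E.
  by move: (congr1 tag E) => /= E'; rewrite E' eqxx in ne.
have Hcard : #|{: T}| = (\sum_i Phi S L x0 (F i))%N.
  rewrite card_tagged sumnE big_map big_enum /=.
  by apply: eq_bigr => ? _; rewrite card_ord.
rewrite -Hcard.
apply: Phi_ge => //.
exists (fun c => U (enum_val c)), (fun d => W (enum_val d)).
split.
  move=> c; apply: hom_comp; first by case: (Huw (tag (enum_val c))) => Hu _; apply: Hu.
  exact: Hi.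
split.
  move=> d; apply: hom_comp; first exact: Hp.
  by case: (Huw (tag (enum_val d))) => _ [Hw _]; apply: Hw.
by move=> c d; rewrite HUW (inj_eq enum_val_inj).
Qed.

Lemma dsum_Phi (M : rep) k (F : 'I_k -> rep) : is_dsum S M F ->
  Phi S L x0 M = (\sum_i Phi S L x0 (F i))%N.
Proof.
move=> H; apply/eqP; rewrite eqn_leq dsum_Phi_le //; exact: dsum_Phi_ge.
Qed.

End Gen3.

Section Gen4.
Variables (K : fieldType) (m n : nat) (S : {set vert m n}).
Local Notation rep := (repd K m n).

Definition fam2 (A B : rep) := fun i : 'I_2 => if val i == 0%N then A else B.

Lemma dsum2 (M A B : rep) (iA : forall x, 'M[K]_(rdim A x, rdim M x))
  (pA : forall x, 'M[K]_(rdim M x, rdim A x))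
  (iB : forall x, 'M[K]_(rdim B x, rdim M x))
  (pB : forall x, 'M[K]_(rdim M x, rdim B x)) :
  is_hom S iA -> is_hom S pA -> is_hom S iB -> is_hom S pB ->
  (forall x, x \in S -> [/\ iA x *m pA x = 1%:M, iB x *m pB x = 1%:M,
     iA x *m pB x = 0, iB x *m pA x = 0 & pA x *m iA x + pB x *m iB x = 1%:M]) ->
  is_dsum S M (fam2 A B).
Proof.
move=> HiA HpA HiB HpB Hx.
exists (fun i => if val i == 0%N as b return forall x, 'M[K]_(rdim (if b then A else B) x, rdim M x)
          then iA else iB).
exists (fun i => if val i == 0%N as b return forall x, 'M[K]_(rdim M x, rdim (if b then A else B) x)
          then pA else pB).
split; first by case=> [[|[|i]] Hi].
split; first by case=> [[|[|i]] Hi].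
move=> x xS; case: (Hx x xS) => H1 H2 H3 H4 H5.
split; first by case=> [[|[|i]] Hi].
split; first by case=> [[|[|i]] Hi]; case=> [[|[|j]] Hj].
by rewrite big_ord_recl big_ord1.
Qed.

Variables (L : rep) (x0 : vert m n).
Hypothesis HL1 : rdim L x0 = 1%N.
Hypothesis Hx0 : x0 \in S.
Hypothesis HLrep : is_rep S L.
Hypothesis HLend : forall e : (forall x, 'M[K]_(rdim L x, rdim L x)), is_hom S e ->
  forall x, x \in S -> e x = (\tr (e x0))%:M.

Lemma split_iso (F : rep) : indecomposable S F -> hasD S L x0 F 1 -> is_iso S F L.
Proof.
move=> [HF [HFnz Hind]] [u [w [Hu [Hw Huw]]]].
pose f := u ord0; pose g := w ord0.
have Hf : is_hom S f by apply: Hu.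
have Hg : is_hom S g by apply: Hw.
have fg1 : forall x, x \in S -> f x *m g x = 1%:M.
  move=> x xS; rewrite (HLend (hom_comp Hf Hg) xS) /=.
  by rewrite Huw eqxx.
have [E HE] : exists E : forall x, 'M[K]_(rdim F x), forall x, E x = 1%:M - g x *m f x.
  by exists (fun x => 1%:M - g x *m f x).
have Eg : forall x, x \in S -> E x *m g x = 0.
  by move=> x xS; rewrite HE mulmxBl mul1mx -mulmxA fg1 // mulmx1 subrr.
have fE : forall x, x \in S -> f x *m E x = 0.
  by move=> x xS; rewrite HE mulmxBr mulmx1 mulmxA fg1 // mul1mx subrr.
have EE : forall x, x \in S -> E x *m E x = E x.
  move=> x xS; rewrite {1}HE mulmxBl mul1mx -mulmxA fE // mulmx0 subr0 //.
have [rb [pB [rbE rbpB pBrb EpB]]] : exists (rb : forall x, 'M[K]_(\rank (E x), rdim F x))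
    (pB : forall x, 'M[K]_(rdim F x, \rank (E x))),
    [/\ forall x, x \in S -> rb x *m E x = rb x,
        forall x, x \in S -> rb x *m pB x = 1%:M,
        forall x, pB x *m rb x = E x &
        forall x, x \in S -> E x *m pB x = pB x].
  exists (fun x => row_base (E x)), (fun x => E x *m pinvmx (row_base (E x))).
  have rbE : forall x, x \in S -> row_base (E x) *m E x = row_base (E x).
    move=> x xS; have : (row_base (E x) <= E x)%MS by rewrite eq_row_base.
    by case/submxP => D ->; rewrite -mulmxA EE.
  split => //.
  - by move=> x xS; rewrite mulmxA rbE // mulmxVp // row_base_free.
  - by move=> x; rewrite mulmxKpV // eq_row_base.
  - by move=> x xS; rewrite mulmxA EE.
have rbg : forall x, x \in S -> rb x *m g x = 0.
  by move=> x xS; rewrite -rbE // -mulmxA Eg // mulmx0.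
have fpB : forall x, x \in S -> f x *m pB x = 0.
  by move=> x xS; rewrite -EpB // mulmxA fE // mul0mx.
pose N := @Repd K m n (fun x => \rank (E x)) (fun x y => rb x *m rmap F x y *m pB y).
have key1 : forall x y, x \in S -> y \in S -> gle x y ->
    rb x *m rmap F x y *m E y = rb x *m rmap F x y.
  move=> x y xS yS xy; rewrite (HE y) mulmxBr mulmx1 !mulmxA.
  rewrite -(mulmxA (rb x)) Hg // mulmxA rbg // !mul0mx subr0 //.
have HiB : is_hom S (M:=N) (N:=F) rb.
  move=> x y xS yS xy /=.
  rewrite -mulmxA; rewrite (pBrb y). exact: key1.
have HpB : is_hom S (M:=F) (N:=N) pB.
  move=> x y xS yS xy.
  change (rmap F x y *m pB y = pB x *m (rb x *m rmap F x y *m pB y)).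
  rewrite !mulmxA pBrb (HE x) mulmxBl mul1mx.
  by rewrite mulmxBl -(mulmxA (g x)) -Hf // -!mulmxA fpB // !mulmx0 subr0.
have HN : is_rep S N.
  split.
    by move=> x xS /=; case: HF => HF1 _; rewrite HF1 // mulmx1 rbpB.
  move=> x y z xS yS zS xy yz /=.
  rewrite !mulmxA -(mulmxA _ (pB y)) pBrb key1 //.
  by case: HF => _ HF2; rewrite -(mulmxA _ (rmap F x y)) -HF2.
have Hds : is_dsum S F (fam2 L N).
  apply: (dsum2 Hf Hg HiB HpB) => x xS.
  split => //; [exact: fg1 | exact: rbpB | exact: fpB | exact: rbg |].
  by rewrite pBrb (HE x) addrC subrK.
case: (Hind L N HLrep HN Hds) => [HLz|HNz].
  by move: (HLz x0 Hx0); rewrite HL1.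
exists g, f; split => //; split => //.
move=> x xS; split; last exact: fg1.
have : E x = 0 by apply/eqP; rewrite -mxrank_eq0; apply/eqP; exact: HNz.
by rewrite (HE x) => /eqP; rewrite subr_eq0 => /eqP <-.
Qed.

End Gen4.

Lemma mx0dim (K : fieldType) p q (A B : 'M[K]_(p, q)) : p = 0%N -> A = B.
Proof. by move=> Hp; subst p; apply/matrixP => [[]]. Qed.

Section Gen5.
Variables (K : fieldType) (m n : nat) (S : {set vert m n}).
Local Notation rep := (repd K m n).

Definition ndsum (M : rep) (k : nat) (FF : nat -> rep)
  (ii : forall a x, 'M[K]_(rdim (FF a) x, rdim M x))
  (pp : forall a x, 'M[K]_(rdim M x, rdim (FF a) x)) : Prop :=
  [/\ forall a, (a < k)%N -> is_hom S (ii a),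
      forall a, (a < k)%N -> is_hom S (pp a) &
      forall x, x \in S ->
       [/\ forall a, (a < k)%N -> ii a x *m pp a x = 1%:M,
           forall a b, (a < k)%N -> (b < k)%N -> a != b -> ii a x *m pp b x = 0 &
           \sum_(a < k) pp a x *m ii a x = 1%:M]].

Lemma ndsum_dsum M k FF ii pp : @ndsum M k FF ii pp -> is_dsum S M (fun i : 'I_k => FF i).
Proof.
case=> Hi Hp Hx.
exists (fun i => ii i), (fun i => pp i).
split; first by move=> i; apply: Hi.
split; first by move=> i; apply: Hp.
move=> x xS; case: (Hx x xS) => H1 H0 Hs.
split; first by move=> i; apply: H1.
by split => // i j ne; apply: H0.
Qed.

Definition catF (kA : nat) (FA FB : nat -> rep) (a : nat) :=
  if (a < kA)%N then FA a else FB (a - kA)%N.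

Definition cati (M : rep) kA (FA FB : nat -> rep)
  (iA : forall a x, 'M[K]_(rdim (FA a) x, rdim M x))
  (iB : forall a x, 'M[K]_(rdim (FB a) x, rdim M x)) :
  forall a x, 'M[K]_(rdim (catF kA FA FB a) x, rdim M x) :=
  fun a => if (a < kA)%N as b return forall x, 'M[K]_(rdim (if b then FA a else FB (a - kA)%N) x, rdim M x)
           then iA a else iB (a - kA)%N.

Definition catp (M : rep) kA (FA FB : nat -> rep)
  (pA : forall a x, 'M[K]_(rdim M x, rdim (FA a) x))
  (pB : forall a x, 'M[K]_(rdim M x, rdim (FB a) x)) :
  forall a x, 'M[K]_(rdim M x, rdim (catF kA FA FB a) x) :=
  fun a => if (a < kA)%N as b return forall x, 'M[K]_(rdim M x, rdim (if b then FA a else FB (a - kA)%N) x)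
           then pA a else pB (a - kA)%N.

Lemma cat_ndsum (M A B : rep) (jA : forall x, 'M[K]_(rdim A x, rdim M x))
  (qA : forall x, 'M[K]_(rdim M x, rdim A x))
  (jB : forall x, 'M[K]_(rdim B x, rdim M x))
  (qB : forall x, 'M[K]_(rdim M x, rdim B x)) kA kB FA iiA ppA FB iiB ppB :
  is_hom S jA -> is_hom S qA -> is_hom S jB -> is_hom S qB ->
  (forall x, x \in S -> [/\ jA x *m qA x = 1%:M, jB x *m qB x = 1%:M,
     jA x *m qB x = 0, jB x *m qA x = 0 & qA x *m jA x + qB x *m jB x = 1%:M]) ->
  @ndsum A kA FA iiA ppA -> @ndsum B kB FB iiB ppB ->
  @ndsum M (kA + kB) (catF kA FA FB)
    (@cati M kA FA FB (fun a x => iiA a x *m jA x) (fun a x => iiB a x *m jB x))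
    (@catp M kA FA FB (fun a x => qA x *m ppA a x) (fun a x => qB x *m ppB a x)).
Proof.
move=> HjA HqA HjB HqB Hx [HiA HpA HxA] [HiB HpB HxB].
split.
- move=> a Ha; rewrite /cati /catF; move: Ha.
  case: (ltnP a kA) => Ha Hk.
    by apply: hom_comp => //; apply: HiA.
  by apply: hom_comp => //; apply: HiB; lia.
- move=> a Ha; rewrite /catp /catF; move: Ha.
  case: (ltnP a kA) => Ha Hk.
    by apply: hom_comp => //; apply: HpA.
  by apply: hom_comp => //; apply: HpB; lia.
move=> x xS; case: (Hx x xS) => H1 H2 H3 H4 H5.
case: (HxA x xS) => A1 A0 As; case: (HxB x xS) => B1 B0 Bs.
split.
- move=> a Ha; rewrite /cati /catp /catF; move: Ha.
  case: (ltnP a kA) => Ha Hk.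
    by rewrite -mulmxA (mulmxA (jA x)) H1 mul1mx A1.
  by rewrite -mulmxA (mulmxA (jB x)) H2 mul1mx B1 //; lia.
- move=> a b Ha Hb ne; rewrite /cati /catp /catF.
  move: Ha Hb ne.
  case: (ltnP a kA) => Ha; case: (ltnP b kA) => Hb Hka Hkb ne.
  + by rewrite -mulmxA (mulmxA (jA x)) H1 mul1mx A0.
  + by rewrite -mulmxA (mulmxA (jA x)) H3 mul0mx mulmx0.
  + by rewrite -mulmxA (mulmxA (jB x)) H4 mul0mx mulmx0.
  + by rewrite -mulmxA (mulmxA (jB x)) H2 mul1mx B0 //; lia.
rewrite big_split_ord /=.
have EA : forall a : 'I_kA, @catp M kA FA FB (fun a x => qA x *m ppA a x) (fun a x => qB x *m ppB a x) a x
    *m @cati M kA FA FB (fun a x => iiA a x *m jA x) (fun a x => iiB a x *m jB x) a x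
    = qA x *m (ppA a x *m iiA a x) *m jA x.
  move=> a; rewrite /cati /catp /catF; move: (ltn_ord a).
  by case: (_ < kA)%N => // _; rewrite !mulmxA.
have EB : forall b : 'I_kB, @catp M kA FA FB (fun a x => qA x *m ppA a x) (fun a x => qB x *m ppB a x) (kA + b)%N x
    *m @cati M kA FA FB (fun a x => iiA a x *m jA x) (fun a x => iiB a x *m jB x) (kA + b)%N x
    = qB x *m (ppB b x *m iiB b x) *m jB x.
  move=> b; rewrite /cati /catp /catF.
  have Hf : (kA + b < kA)%N = false by lia.
  have E : (kA + b - kA)%N = b by lia.
  move: Hf; case: (kA + b < kA)%N => // _.
  by rewrite E !mulmxA.
rewrite (eq_bigr _ (fun a _ => EA a)) (eq_bigr _ (fun b _ => EB b)).
by rewrite -!mulmx_suml -!mulmx_sumr As Bs !mulmx1 H5.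
Qed.
End Gen5.

Section Gen6.
Variables (K : fieldType) (m n : nat) (S : {set vert m n}).
Local Notation rep := (repd K m n).

Definition dimS (M : rep) := (\sum_(x in S) rdim M x)%N.

Definition o1 : 'I_2 := @Ordinal 2 1 isT.

Lemma dsum2_ext (M A B : rep) : is_dsum S M (fam2 A B) ->
  exists (jA : forall x, 'M[K]_(rdim A x, rdim M x))
         (qA : forall x, 'M[K]_(rdim M x, rdim A x))
         (jB : forall x, 'M[K]_(rdim B x, rdim M x))
         (qB : forall x, 'M[K]_(rdim M x, rdim B x)),
  [/\ is_hom S jA, is_hom S qA, is_hom S jB, is_hom S qB &
  (forall x, x \in S -> [/\ jA x *m qA x = 1%:M, jB x *m qB x = 1%:M,
     jA x *m qB x = 0, jB x *m qA x = 0 & qA x *m jA x + qB x *m jB x = 1%:M])].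
Proof.
case=> iota [pi [Hi [Hp Hx]]].
exists (iota ord0), (pi ord0), (iota o1), (pi o1).
split; [exact: (Hi ord0) | exact: (Hp ord0) | exact: (Hi o1) | exact: (Hp o1) |].
move=> x xS; case: (Hx x xS) => H1 [H0 Hs].
split; [exact: (H1 ord0) | exact: (H1 o1) | exact: (H0 ord0 o1 isT) | exact: (H0 o1 ord0 isT) | ].
move: Hs; rewrite big_ord_recl big_ord1.
rewrite (_ : lift ord0 ord0 = o1); last by apply: val_inj.
move=> Hs; exact: Hs.
Qed.

Lemma dsum2_dims (M A B : rep) : is_dsum S M (fam2 A B) ->
  forall x, x \in S -> (rdim A x + rdim B x <= rdim M x)%N.
Proof.
case/dsum2_ext => jA [qA [jB [qB [_ _ _ _ Hx]]]] x xS.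
case: (Hx x xS) => H1 H2 H3 H4 _.
have E : col_mx (jA x) (jB x) *m row_mx (qA x) (qB x) = 1%:M.
  by rewrite mul_col_row H1 H2 H3 H4 -scalar_mx_block.
have := mxrankM_maxl (col_mx (jA x) (jB x)) (row_mx (qA x) (qB x)).
rewrite E mxrank1 => H; apply: leq_trans H _; exact: rank_leq_col.
Qed.

Definition decP_of (M : rep) : Prop :=
  exists k FF ii pp, @ndsum K m n S M k FF ii pp /\ forall a, (a < k)%N -> indecomposable S (FF a).

Lemma decomp_aux (M : rep) :
  (forall M' : rep, (dimS M' < dimS M)%N -> is_rep S M' -> decP_of M') ->
  is_rep S M -> decP_of M.
Proof.
move=> IH Hrep.
case: (classic (indecomposable S M)) => Hind.
  exists 1%N, (fun _ => M), (fun _ x => 1%:M), (fun _ x => 1%:M).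
  split; last by move=> a _.
  split; [by move=> *; apply: hom_id | by move=> *; apply: hom_id |].
  move=> x xS; split.
  - by move=> *; rewrite mulmx1.
  - by move=> a b Ha Hb ne; exfalso; lia.
  - by rewrite big_ord1 mulmx1.
case: (classic (is_zero S M)) => Hz.
  exists 0%N, (fun _ => M), (fun _ x => 1%:M), (fun _ x => 1%:M).
  split; last by [].
  split => // x xS; split => //.
  by rewrite big_ord0; apply: mx0dim; apply: Hz.
have [A [B [HA HB Hd HAz HBz]]] : exists A B, [/\ is_rep S A, is_rep S B,
    is_dsum S M (fam2 A B), ~ is_zero S A & ~ is_zero S B].
  apply: NNPP => Hn; apply: Hind; split => //; split => // A B HA HB Hd.
  apply: NNPP => Hn2; apply: Hn; exists A, B; split => // HZ; apply: Hn2; [left|right] => //.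
have Hdim := dsum2_dims Hd.
have Hsum : (dimS A + dimS B <= dimS M)%N.
  rewrite /dimS -big_split /=; apply: leq_sum => x xS; exact: Hdim.
have posS (C : rep) : ~ is_zero S C -> (0 < dimS C)%N.
  move=> HC; apply: NNPP => Hn; apply: HC => x xS.
  apply/eqP; apply: NNPP => Hx; apply: Hn.
  rewrite /dimS (bigD1 x) //=; move: Hx; case: (rdim C x) => //.
have HAd : (dimS A < dimS M)%N by have := posS B HBz; lia.
have HBd : (dimS B < dimS M)%N by have := posS A HAz; lia.
case: (IH A HAd HA) => kA [FA [iiA [ppA [NA IA]]]].
case: (IH B HBd HB) => kB [FB [iiB [ppB [NB IB]]]].
case: (dsum2_ext Hd) => jA [qA [jB [qB [HjA HqA HjB HqB Hx]]]].
eexists; eexists; eexists; eexists; split.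
  exact: (cat_ndsum HjA HqA HjB HqB Hx NA NB).
move=> a Ha; rewrite /catF; case: ltnP => Ha'.
  exact: IA.
apply: IB; lia.
Qed.

Lemma decomp_ex (M : rep) : is_rep S M -> decP_of M.
Proof.
have : (dimS M <= dimS M)%N by [].
move: {2}(dimS M) => N; elim: N M => [|N IHN] M HM Hrep.
  apply: decomp_aux => // M' HM'; exfalso; lia.
apply: decomp_aux => // M' HM' Hr'; apply: IHN => //; lia.
Qed.

End Gen6.

Section Gen7.
Variables (K : fieldType) (m n : nat) (S : {set vert m n}).
Local Notation rep := (repd K m n).

Lemma iso_dsum1 (F L : rep) : is_iso S F L -> is_dsum S F (fun _ : 'I_1 => L).
Proof.
case=> g [h [Hg [Hh Hgh]]].
exists (fun _ => h), (fun _ => g).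
split => //; split => // x xS; case: (Hgh x xS) => H1 H2.
split => //; split; first by move=> i j; rewrite !ord1 eqxx.
by rewrite big_ord1.
Qed.

Variables (L : rep) (x0 : vert m n).
Hypothesis HL1 : rdim L x0 = 1%N.
Hypothesis Hx0 : x0 \in S.
Hypothesis HLrep : is_rep S L.
Hypothesis HLend : forall e : (forall x, 'M[K]_(rdim L x, rdim L x)), is_hom S e ->
  forall x, x \in S -> e x = (\tr (e x0))%:M.

Lemma Phi_L : Phi S L x0 L = 1%N.
Proof.
apply/eqP; rewrite eqn_leq; apply/andP; split.
  by have := hasD_le HL1 (Phi_has S L x0 L); rewrite HL1.
apply: Phi_ge => //.
exists (fun _ x => 1%:M), (fun _ x => 1%:M).
split; first by move=> *; apply: hom_id.
split; first by move=> *; apply: hom_id.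
by move=> a b; rewrite !ord1 eqxx mulmx1 mxtrace1 HL1.
Qed.

Lemma Phi_iso (F : rep) : is_iso S F L -> Phi S L x0 F = 1%N.
Proof.
move=> H; rewrite (dsum_Phi HL1 Hx0 (iso_dsum1 H)) big_ord1; exact: Phi_L.
Qed.

Lemma Phi_indec (F : rep) : indecomposable S F ->
  Phi S L x0 F = nat_of_bool (decP (is_iso S F L)).
Proof.
move=> Hind; case: decPP => Hiso; first exact: Phi_iso.
apply/eqP; rewrite eqn0Ngt; apply/negP => Hp.
apply: Hiso; apply: (split_iso HL1 Hx0 HLrep HLend Hind).
case: (Phi_has S L x0 F) => u [w [Hu [Hw Huw]]].
exists (fun _ => u (Ordinal Hp)), (fun _ => w (Ordinal Hp)).
split => //; split => // a b; by rewrite Huw !ord1 !eqxx.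
Qed.

Lemma mult_Phi (M : rep) : is_rep S M -> mult S M L = Phi S L x0 M.
Proof.
move=> HM.
set P := fun c => exists (k : nat) (F : 'I_k -> rep),
    (forall i, indecomposable S (F i)) /\ is_dsum S M F /\
    exists s : {set 'I_k}, (forall i, i \in s <-> is_iso S (F i) L) /\ c = #|s|.
have HP : forall c, P c -> c = Phi S L x0 M.
  move=> c [k [F [Hind [Hd [s [Hs ->]]]]]].
  rewrite (dsum_Phi HL1 Hx0 Hd) -sum1_card big_mkcond /=.
  apply: eq_bigr => i _; rewrite Phi_indec //.
  case: decPP => Hi.
    by have /Hs -> := Hi.
  by case: ifP => // /Hs.
have Hex : exists c, P c.
  case: (decomp_ex HM) => k [FF [ii [pp [Nd Ind]]]].
  exists #|[set i : 'I_k | decP (is_iso S (FF i) L)]|, k, (fun i : 'I_k => FF i).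
  split; first by move=> i; apply: Ind.
  split; first exact: ndsum_dsum Nd.
  eexists; split; last by reflexivity.
  by move=> i; rewrite inE; split => [/decPP|/decPP].
apply: HP; rewrite /mult; exact: epsilon_spec.
Qed.

End Gen7.

Lemma mx0dimr (K : fieldType) p q (A B : 'M[K]_(p, q)) : q = 0%N -> A = B.
Proof. by move=> Hq; subst q; apply/matrixP => i []. Qed.

Lemma mulmx_0dim (K : fieldType) p q r (A : 'M[K]_(p, q)) (B : 'M[K]_(q, r)) :
  q = 0%N -> A *m B = 0.
Proof. by move=> Hq; subst q; apply/matrixP => i j; rewrite !mxE big_ord0. Qed.

Lemma ones_mul (K : fieldType) a b c : (a <= 1)%N -> (b <= 1)%N -> (c <= 1)%N ->
  ((0 < a)%N -> (0 < c)%N -> (0 < b)%N) ->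
  (\matrix_(i, j) 1 : 'M[K]_(a, b)) *m (\matrix_(i, j) 1 : 'M[K]_(b, c)) = \matrix_(i, j) 1.
Proof.
case: a => [|[|a]] // _; first by move=> *; apply: mx0dim.
case: c => [|[|c]] // Hb _; first by move=> *; apply: mx0dimr.
move=> /(_ isT isT); case: b Hb => [|[|b]] // _ _.
by apply/matrixP => i j; rewrite !mxE big_ord1 !mxE mulr1.
Qed.

Lemma ones_id (K : fieldType) p : (p <= 1)%N -> (\matrix_(i, j) 1 : 'M[K]_p) = 1%:M.
Proof.
case: p => [|[|p]] // _; first by apply: mx0dim.
by apply/matrixP => i j; rewrite !ord1 !mxE.
Qed.

Lemma tr_hom_eq (K : fieldType) p q (A : 'M[K]_p) (B : 'M[K]_q) : p = 1%N -> q = 1%N ->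
  (\matrix_(i, j) 1 : 'M[K]_(p, q)) *m B = A *m (\matrix_(i, j) 1 : 'M[K]_(p, q)) ->
  \tr A = \tr B.
Proof.
move=> Hp Hq; subst p q => /matrixP /(_ 0 0).
rewrite !mxE !big_ord1 !mxE mul1r mulr1 => E.
by rewrite /mxtrace !big_ord1 -E.
Qed.

Lemma one_neq0 (K : fieldType) p : p = 1%N -> (1%:M : 'M[K]_p) != 0.
Proof.
move=> Hp; subst p; apply/eqP => /matrixP /(_ 0 0); rewrite !mxE /=.
by move/eqP; rewrite oner_eq0.
Qed.

Lemma mulmx_ones1 (K : fieldType) p q (A : 'M[K]_(p, q)) : q = 1%N ->
  A *m (\matrix_(i, j) 1 : 'M[K]_q) = A.
Proof. by move=> Hq; rewrite ones_id ?mulmx1 // Hq. Qed.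

Lemma ones1_mulmx (K : fieldType) p q (A : 'M[K]_(p, q)) : p = 1%N ->
  (\matrix_(i, j) 1 : 'M[K]_p) *m A = A.
Proof. by move=> Hp; rewrite ones_id ?mul1mx // Hp. Qed.

Section VIsec.
Variables (K : fieldType) (m n : nat).
Local Notation rep := (repd K m n).

Definition Rc (S I0 : {set vert m n}) : rel (vert m n) :=
  fun a b => [&& a \in S, a \in I0, b \in S, b \in I0 & gle a b || gle b a].

Lemma VI_rep (S I0 : {set vert m n}) :
  (forall x y z, x \in S -> y \in S -> z \in S -> gle x y -> gle y z ->
     x \in I0 -> z \in I0 -> y \in I0) ->
  is_rep S (VI K I0).
Proof.
move=> Hcv; split.
  by move=> x _ /=; apply: ones_id; apply: leq_b1.
move=> x y z xS yS zS xy yz /=.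
rewrite ones_mul ?leq_b1 //.
case: (x \in I0) (@Hcv x y z xS yS zS xy yz) => //; case: (z \in I0) => //.
by move=> /(_ isT isT) ->.
Qed.

Variables (S I0 : {set vert m n}) (x0 : vert m n).
Hypothesis Hx0S : x0 \in S.
Hypothesis Hx0I : x0 \in I0.
Hypothesis Hconn : forall x, x \in S -> x \in I0 -> connect (Rc S I0) x0 x.

Lemma VI_end (e : forall x, 'M[K]_(rdim (VI K I0) x, rdim (VI K I0) x)) :
  is_hom S e -> forall x, x \in S -> e x = (\tr (e x0))%:M.
Proof.
move=> He x xS.
case xI: (x \in I0); last by apply: mx0dim => /=; rewrite xI.
have step : forall a b, Rc S I0 a b -> \tr (e a) = \tr (e b).
  move=> a b /and5P [aS aI bS bI /orP [ab|ba]].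
    apply: tr_hom_eq; [by rewrite /= aI | by rewrite /= bI | exact: He].
  apply/esym; apply: tr_hom_eq; [by rewrite /= bI | by rewrite /= aI | exact: He].
have Htr : \tr (e x) = \tr (e x0).
  have := Hconn xS xI; case/connectP => p Hp ->.
  move: Hp; move: x0 => a0; elim: p a0 => [|b p IHp] a //= /andP [Hab Hp].
  by rewrite IHp // (step _ _ Hab).
rewrite -Htr; apply: one_scalar; by rewrite /= xI.
Qed.

End VIsec.

Section Grid1.
Variables (m n : nat).
Implicit Types (x y z : vert m n) (I J : {set vert m n}).

Lemma gle_refl x : gle x x.
Proof. by rewrite /gle !leqnn. Qed.

Lemma gle_trans y x z : gle x y -> gle y z -> gle x z.
Proof. by rewrite /gle => /andP [a b] /andP [c d]; apply/andP; split; [exact: leq_trans a c|exact: leq_trans b d]. Qed.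

Lemma arrow_gle x y : arrow x y -> gle x y.
Proof.
rewrite /arrow /gle => /orP [/andP [/eqP -> /eqP <-]|/andP [/eqP -> /eqP <-]].
  by rewrite leqnn leqnSn.
by rewrite leqnn leqnSn.
Qed.

Lemma connI I x y : connectedb I -> x \in I -> y \in I ->
  connect (fun a b => [&& a \in I, b \in I & adj a b]) x y.
Proof. by move=> /forall_inP /(_ x) H xI yI; move: (H xI) => /forall_inP /(_ y yI). Qed.

Lemma boundary I J a b : connectedb J -> a \in J -> a \in I -> b \in J -> b \notin I ->
  exists x y, [/\ x \in I, x \in J, y \in J, y \notin I & adj x y].
Proof.
move=> HJ aJ aI bJ bI; have := connI HJ aJ bJ; case/connectP => p Hp Eb.
elim: p a aJ aI Hp Eb => [|c p IHp] a aJ aI /=; first by move=> _ E; move: bI; rewrite E aI.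
case/andP => /and3P [_ cJ ac] Hp Eb.
case cI: (c \in I); first exact: (IHp c cJ cI Hp Eb).
by exists a, c; split => //; rewrite cI.
Qed.

Lemma conn_Rc_T I x0 : is_interval I -> x0 \in I ->
  forall x, x \in [set: vert m n] -> x \in I -> connect (Rc [set: vert m n] I) x0 x.
Proof.
case/and3P => _ HcI _ x0I x _ xI.
apply: connect_sub (connI HcI x0I xI) => a b /and3P [aI bI ab].
apply: connect1; rewrite /Rc !inE aI bI /=.
by case/orP: ab => /arrow_gle ->; rewrite ?orbT.
Qed.

Lemma convex_rep I x y z : convexb I -> x \in I -> z \in I -> gle x y -> gle y z -> y \in I.
Proof.
move=> /forall_inP /(_ x) H xI zI xy yz; move: (H xI) => /forall_inP /(_ z zI) /forallP /(_ y).
by rewrite xy yz.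
Qed.

End Grid1.

Section PhiVals.
Variables (K : fieldType) (m n : nat).
Local Notation rep := (repd K m n).

Lemma hasD_one (S : {set vert m n}) (L : rep) x0 (V : rep) :
  (0 < Phi S L x0 V)%N -> hasD S L x0 V 1.
Proof.
move=> Hp; case: (Phi_has S L x0 V) => u [w [Hu [Hw Huw]]].
exists (fun _ => u (Ordinal Hp)), (fun _ => w (Ordinal Hp)).
split => //; split => // a b; by rewrite Huw !ord1 !eqxx.
Qed.

Variables (S I0 : {set vert m n}) (x0 : vert m n).
Hypothesis Hx0S : x0 \in S.
Hypothesis Hx0I : x0 \in I0.
Hypothesis Hconn : forall x, x \in S -> x \in I0 -> connect (Rc S I0) x0 x.

Lemma Phi_le1 (J : {set vert m n}) : (Phi S (VI K I0) x0 (VI K J) <= 1)%N.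
Proof.
have H1 : rdim (VI K I0) x0 = 1%N by rewrite /= Hx0I.
apply: leq_trans (hasD_le H1 (Phi_has _ _ _ _)) _; exact: leq_b1.
Qed.

Lemma Phi_vanish (V : rep) :
  (forall f g, is_hom S (M:=VI K I0) (N:=V) f -> is_hom S (M:=V) (N:=VI K I0) g ->
     exists z, [/\ z \in S, z \in I0 & f z *m g z = 0]) ->
  Phi S (VI K I0) x0 V = 0%N.
Proof.
move=> H; apply/eqP; rewrite eqn0Ngt; apply/negP => /hasD_one [u [w [Hu [Hw Huw]]]].
case: (H (u ord0) (w ord0) (Hu _) (Hw _)) => z [zS zI E].
have := VI_end Hconn (hom_comp (Hu ord0) (Hw ord0)) zS.
rewrite /= E Huw eqxx => /esym/eqP; apply/negP.
by apply: one_neq0; rewrite /= zI.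
Qed.

Lemma Phi_E (J : {set vert m n}) : S \subset I0 ->
  Phi S (VI K I0) x0 (VI K J) = (S \subset J).
Proof.
move=> SI; case: (boolP (S \subset J)) => SJ.
  apply/eqP; rewrite eqn_leq Phi_le1 /=.
  have H1 : rdim (VI K I0) x0 = 1%N by rewrite /= Hx0I.
  apply: (Phi_ge H1).
  exists (fun _ x => (\matrix_(i, j) 1 : 'M[K]_(rdim (VI K I0) x, rdim (VI K J) x))).
  exists (fun _ x => (\matrix_(i, j) 1 : 'M[K]_(rdim (VI K J) x, rdim (VI K I0) x))).
  have inIJ : forall x, x \in S -> (x \in I0) && (x \in J).
    by move=> x xS; rewrite (subsetP SI) // (subsetP SJ).
  split.
    move=> _ x y xS yS xy /=; move: (inIJ x xS) (inIJ y yS) => /andP [-> ->] /andP [-> ->].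
    by rewrite !ones_mul.
  split.
    move=> _ x y xS yS xy /=; move: (inIJ x xS) (inIJ y yS) => /andP [-> ->] /andP [-> ->].
    by rewrite !ones_mul.
  move=> a b; rewrite !ord1 eqxx /=.
  move: (inIJ x0 Hx0S) => /andP [-> ->].
  by rewrite ones_mul // ones_id // mxtrace1.
apply: Phi_vanish => f g Hf Hg.
have [z zS zJ] : exists2 z, z \in S & z \notin J.
  by move/subsetPn: SJ => [z zS zJ]; exists z.
exists z; split => //; first exact: (subsetP SI).
by apply: mulmx_0dim; rewrite /= (negbTE zJ).
Qed.

End PhiVals.

Lemma ones_r0 (K : fieldType) p q r (A : 'M[K]_(p, q)) : q = 1%N -> r = 1%N ->
  A *m (\matrix_(i, j) 1 : 'M[K]_(q, r)) = 0 -> A = 0.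
Proof. by move=> Hq Hr; subst q r; rewrite ones_id // mulmx1. Qed.

Lemma ones_l0 (K : fieldType) p q r (B : 'M[K]_(q, r)) : p = 1%N -> q = 1%N ->
  (\matrix_(i, j) 1 : 'M[K]_(p, q)) *m B = 0 -> B = 0.
Proof. by move=> Hp Hq; subst p q; rewrite ones_id // mul1mx. Qed.

Section PhiT.
Variables (K : fieldType) (m n : nat).
Local Notation rep := (repd K m n).
Variables (I : {set vert m n}) (x0 : vert m n).
Hypothesis HI : is_interval I.
Hypothesis Hx0 : x0 \in I.

Lemma VI_rep_T : is_rep [set: vert m n] (VI K I).
Proof.
apply: VI_rep => x y z _ _ _ xy yz xI zI.
by case/and3P: HI => _ _ Hcv; apply: convex_rep Hcv xI zI xy yz.
Qed.

Lemma VI_end_T (e : forall x, 'M[K]_(rdim (VI K I) x, rdim (VI K I) x)) :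
  is_hom [set: vert m n] e -> forall x, x \in [set: vert m n] -> e x = (\tr (e x0))%:M.
Proof. by apply: VI_end; apply: conn_Rc_T. Qed.

Lemma Phi_T (J : {set vert m n}) : is_interval J ->
  Phi [set: vert m n] (VI K I) x0 (VI K J) = (J == I).
Proof.
move=> HJ.
have H1 : rdim (VI K I) x0 = 1%N by rewrite /= Hx0.
have Hx0T : x0 \in [set: vert m n] by rewrite inE.
case: eqP => [->|ne].
  exact: (Phi_L [set: vert m n] H1).
apply: Phi_vanish => //; first by apply: conn_Rc_T.
move=> f g Hf Hg.
case: (boolP (I \subset J)) => IJ; last first.
  move/subsetPn: IJ => [z zI zJ]; exists z; split => //.
  by apply: mulmx_0dim; rewrite /= (negbTE zJ).
have JI : ~~ (J \subset I).
  by apply/negP => JI; apply: ne; apply/eqP; rewrite eqEsubset JI IJ.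
move/subsetPn: JI => [b bJ bI].
case/and3P: HJ => _ HcJ _.
case: (boundary HcJ (subsetP IJ _ Hx0) Hx0 bJ bI) => x [y [xI xJ yJ yI]].
move=> /orP [xy|yx].
  exists x; split; [by rewrite inE | by [] |].
  have := Hf x y (in_setT _) (in_setT _) (arrow_gle xy).
  rewrite mulmx_0dim /=; last by rewrite (negbTE yI).
  move/esym => E; rewrite (ones_r0 _ _ E) ?mul0mx //=; by rewrite ?xJ ?yJ.
exists x; split; [by rewrite inE | by [] |].
have := Hg y x (in_setT _) (in_setT _) (arrow_gle yx).
rewrite [RHS]mulmx_0dim /=; last by rewrite (negbTE yI).
move=> E; rewrite (ones_l0 _ _ E) ?mulmx0 //=; by rewrite ?xJ ?yJ.
Qed.
End PhiT.

Section Ess.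
Variables (m n : nat).
Implicit Types (x y z : vert m n) (I J : {set vert m n}).

Lemma arrow_sum x y : arrow x y -> (x.1 + x.2 < y.1 + y.2)%N.
Proof.
rewrite /arrow => /orP [/andP [/eqP -> /eqP <-]|/andP [/eqP -> /eqP <-]].
  by rewrite ltn_add2l.
by rewrite ltn_add2r.
Qed.

Definition src I x := [arg min_(y < x | (y \in I) && gle y x) (y.1 + y.2)%N].
Definition snk I x := [arg max_(y > x | (y \in I) && gle x y) (y.1 + y.2)%N].

Lemma src_prop I x : x \in I -> [/\ is_source I (src I x), src I x \in I & gle (src I x) x].
Proof.
move=> xI; rewrite /src.
case: arg_minnP; first by rewrite xI gle_refl.
move=> s /andP [sI sx] Hmin; split => //.
rewrite /is_source sI /=; apply/forall_inP => y yI; apply/negP => ys.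
have := Hmin y; rewrite yI (gle_trans (arrow_gle ys) sx) => /(_ isT).
by move=> h2; have := arrow_sum ys; rewrite ltnNge h2.
Qed.

Lemma snk_prop I x : x \in I -> [/\ is_sink I (snk I x), snk I x \in I & gle x (snk I x)].
Proof.
move=> xI; rewrite /snk.
case: arg_maxnP; first by rewrite xI gle_refl.
move=> s /andP [sI xs] Hmax; split => //.
rewrite /is_sink sI /=; apply/forall_inP => y yI; apply/negP => sy.
have := Hmax y; rewrite yI (gle_trans xs (arrow_gle sy)) => /(_ isT).
move=> h2; have := arrow_sum sy => /leq_trans /(_ h2); by rewrite ltnn.
Qed.

Lemma ss_sub_ess k I x : x \in ess_ss I -> x \in ess k I.
Proof.
case: k => //= Hx.
- have xI : x \in I by move: Hx; rewrite inE => /orP [/andP [] | /andP []].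
  rewrite /ess_cc inE xI /=; apply/andP; split; apply/imsetP; by exists x.
- by move: Hx; rewrite inE => /orP [/andP [] | /andP []].
Qed.

Lemma ess_sub k I : ess k I \subset I.
Proof.
apply/subsetP => x; case: k => //=.
- by rewrite inE => /orP [/andP [] | /andP []].
- by rewrite /ess_cc inE => /andP [].
Qed.

Lemma src_ess k I x : x \in I -> src I x \in ess k I.
Proof. by move=> xI; case: (src_prop xI) => H _ _; apply: ss_sub_ess; rewrite inE H. Qed.

Lemma snk_ess k I x : x \in I -> snk I x \in ess k I.
Proof. by move=> xI; case: (snk_prop xI) => H _ _; apply: ss_sub_ess; rewrite inE H orbT. Qed.

Lemma ess_subJ k I J : convexb J -> (ess k I \subset J) = (I \subset J).
Proof.
move=> HJ; apply/idP/idP; last by move=> IJ; apply: subset_trans (ess_sub k I) IJ.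
move=> EJ; apply/subsetP => x xI.
case: (src_prop xI) => _ _ sx; case: (snk_prop xI) => _ _ xt.
apply: (convex_rep HJ _ _ sx xt); apply: (subsetP EJ).
  exact: src_ess.
exact: snk_ess.
Qed.

Lemma Rc_sym (S I0 : {set vert m n}) a b : Rc S I0 a b = Rc S I0 b a.
Proof. by rewrite /Rc; case: (a \in S); case: (a \in I0); case: (b \in S); case: (b \in I0); rewrite //= orbC. Qed.

Lemma conn_ess k I a0 : connectedb I -> a0 \in I ->
  forall x, x \in ess k I -> x \in I -> connect (Rc (ess k I) I) (src I a0) x.
Proof.
move=> HcI a0I.
set E := ess k I; set R := Rc E I.
have Rsym : connect_sym R by apply: sym_connect_sym => a b; apply: Rc_sym.
have EI := subsetP (ess_sub k I).
have Rgle : forall a b, a \in E -> b \in E -> gle a b -> R a b.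
  by move=> a b aE bE ab; rewrite /R /Rc aE bE !EI //= ab.
have st : forall x, x \in I -> R (src I x) (snk I x).
  move=> x xI; apply: Rgle; [exact: src_ess | exact: snk_ess |].
  by case: (src_prop xI) => _ _ sx; case: (snk_prop xI) => _ _ xt; apply: gle_trans xt.
have Hsrc : forall x, x \in I -> connect R (src I a0) (src I x).
  move=> x xI; have := connI HcI a0I xI; case/connectP => p Hp ->.
  elim: p a0 a0I Hp {xI} => [|b p IHp] a aI //= /andP [/and3P [_ bI ab] Hp].
  apply: (@connect_trans _ _ (src I b)) _ (IHp b bI Hp).
  case/orP: ab => ab.
    apply: (@connect_trans _ _ (snk I b)).
      apply: connect1; apply: Rgle; [exact: src_ess | exact: snk_ess |].
      case: (src_prop aI) => _ _ sa; case: (snk_prop bI) => _ _ bt.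
      by apply: gle_trans sa _; apply: gle_trans (arrow_gle ab) bt.
    by rewrite Rsym; apply: connect1; apply: st.
  apply: (@connect_trans _ _ (snk I a)); first by apply: connect1; apply: st.
  rewrite Rsym; apply: connect1; apply: Rgle; [exact: src_ess | exact: snk_ess |].
  case: (src_prop bI) => _ _ sb; case: (snk_prop aI) => _ _ ta.
  by apply: gle_trans sb _; apply: gle_trans (arrow_gle ab) ta.
move=> x xE xI; apply: (@connect_trans _ _ (src I x)) (Hsrc x xI) _.
apply: connect1; apply: Rgle => //; first exact: src_ess.
by case: (src_prop xI).
Qed.

End Ess.

Lemma alt_sum (T : finType) (A : {set T}) :
  \sum_(X in powerset A) (-1 : int) ^+ #|X| = ((A == set0) : nat)%:Z.
Proof.
case: (set_0Vmem A) => [->|[a aA]].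
  by rewrite powerset0 big_set1 cards0 expr0 eqxx.
have -> : (A == set0) = false by apply/negbTE/set0Pn; exists a.
pose h (X : {set T}) := if a \in X then X :\ a else a |: X.
have hK : involutive h.
  move=> X; rewrite /h; case: (boolP (a \in X)) => aX.
    by rewrite !inE eqxx /= setD1K.
  by rewrite setU11 setU1K.
set s := \sum_(X in powerset A) _.
have Hs : s = - s.
  rewrite {1}/s (reindex_inj (inv_inj hK)) /s -sumrN.
  apply: eq_big => X.
    rewrite !powersetE /h; case: (boolP (a \in X)) => aX.
      apply/idP/idP => H; last exact: subset_trans (subD1set _ _) H.
      by rewrite -(setD1K aX) subUset sub1set aA H.
    by rewrite subUset sub1set aA.
  rewrite /h; case: (boolP (a \in X)) => aX _.
    by rewrite (cardsD1 a X) aX add1n exprS mulN1r opprK.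
  by rewrite cardsU1 aX add1n exprS mulN1r.
have : (2 * s = 0)%R by rewrite mulr2n mulrDl mul1r {2}Hs subrr.
by move/eqP; rewrite mulf_eq0 => /orP [//|/eqP ->].
Qed.

Section Join.
Variables (m n : nat).
Implicit Types (x y z : vert m n) (I J : {set vert m n}).

Lemma pair_eq x z : (x.1 = z.1 :> nat) -> (x.2 = z.2 :> nat) -> x = z.
Proof. by case: x z => [x1 x2] [z1 z2] /= /val_inj -> /val_inj ->. Qed.

Lemma stair x z : gle x z ->
  connect (fun a b => [&& gle x a, gle a z, gle x b, gle b z & adj a b]) x z.
Proof.
move=> xz.
have : forall d x', (z.1 - x'.1 + (z.2 - x'.2) <= d)%N -> gle x x' -> gle x' z ->
  connect (fun a b => [&& gle x a, gle a z, gle x b, gle b z & adj a b]) x' z.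
  elim=> [|d IH] x' Hd xx' x'z.
    move: x'z; rewrite /gle => /andP [h1 h2].
    rewrite (@pair_eq x' z) //; lia.
  case: (ltnP x'.1 z.1) => h1.
    pose y : vert m n := (Ordinal (leq_ltn_trans h1 (ltn_ord z.1)), x'.2).
    have ar : arrow x' y by apply/orP; right; rewrite /= !eqxx.
    have xy : gle x y by apply: gle_trans xx' (arrow_gle ar).
    have yz : gle y z by move: x'z; rewrite /gle /= => /andP [_ ->]; rewrite h1.
    apply: (@connect_trans _ _ y); last by apply: IH => //; move: Hd; rewrite /=; lia.
    by apply: connect1; rewrite xx' x'z xy yz /adj ar.
  case: (ltnP x'.2 z.2) => h2.
    pose y : vert m n := (x'.1, Ordinal (leq_ltn_trans h2 (ltn_ord z.2))).
    have ar : arrow x' y by apply/orP; left; rewrite /= !eqxx.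
    have xy : gle x y by apply: gle_trans xx' (arrow_gle ar).
    have yz : gle y z by move: x'z; rewrite /gle /= => /andP [-> _]; rewrite h2.
    apply: (@connect_trans _ _ y); last by apply: IH => //; move: Hd; rewrite /=; lia.
    by apply: connect1; rewrite xx' x'z xy yz /adj ar.
  move: x'z; rewrite /gle => /andP [h3 h4].
  rewrite (@pair_eq x' z) //; lia.
by move=> /(_ _ x (leqnn _) (gle_refl x) xz).
Qed.

Definition hull (T : {set {set vert m n}}) : {set vert m n} :=
  [set z | [exists x, exists y, [&& x \in \bigcup_(C in T) C, y \in \bigcup_(C in T) C,
     gle x z & gle z y]]].

Lemma hull_spec I (T : {set {set vert m n}}) : is_interval I ->
  (forall C, C \in T -> is_interval C /\ I \subset C) -> T != set0 ->
  is_interval (hull T) /\ (forall L, L \in T -> L \subset hull T) /\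
  (forall J', is_interval J' -> (forall L, L \in T -> L \subset J') -> hull T \subset J').
Proof.
move=> HI HT /set0Pn [C0 C0T].
have memU : forall z, (z \in \bigcup_(C in T) C) = [exists C in T, z \in C].
  move=> z; apply/bigcupP/exists_inP => [[C CT zC]|[C CT zC]]; by exists C.
have sub : forall L, L \in T -> L \subset hull T.
  move=> L LT; apply/subsetP => z zL; rewrite inE; apply/existsP; exists z; apply/existsP; exists z.
  by rewrite gle_refl memU; apply/and3P; split => //; apply/exists_inP; exists L.
split; last split => //.
  case/and3P: HI => /set0Pn [i0 i0I] _ _.
  have i0H : i0 \in hull T.
    apply: (subsetP (sub _ C0T)); case: (HT _ C0T) => _ /subsetP; exact.
  have Hconn : forall z, z \in hull T ->
      connect (fun a b => [&& a \in hull T, b \in hull T & adj a b]) i0 z.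
    move=> z; rewrite inE => /existsP [x /existsP [y /and4P [xU yU xz zy]]].
    have := xU; rewrite memU => /exists_inP [C CT xC].
    case: (HT _ CT) => /and3P [_ HcC _] IC.
    apply: (@connect_trans _ _ x).
      apply: connect_sub (connI HcC (subsetP IC _ i0I) xC) => a b /and3P [aC bC ab].
      by apply: connect1; rewrite ab !(subsetP (sub _ CT)).
    apply: connect_sub (stair xz) => a b /and5P [xa az xb bz ab].
    apply: connect1; rewrite ab andbT !inE; apply/andP; split.
      apply/existsP; exists x; apply/existsP; exists y.
      by rewrite xU yU xa (gle_trans az zy).
    apply/existsP; exists x; apply/existsP; exists y.
    by rewrite xU yU xb (gle_trans bz zy).
  have Hsym : connect_sym (fun a b => [&& a \in hull T, b \in hull T & adj a b]).
    by apply: sym_connect_sym => a b; rewrite /adj orbC andbCA !andbA [(b \in _) && _]andbC.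
  apply/and3P; split.
  - by apply/set0Pn; exists i0.
  - apply/forall_inP => x xH; apply/forall_inP => y yH.
    by apply: (@connect_trans _ _ i0); [rewrite Hsym|]; apply: Hconn.
  - apply/forall_inP => x; rewrite inE => /existsP [x1 /existsP [y1 /and4P [x1U y1U x1x xy1]]].
    apply/forall_inP => y; rewrite inE => /existsP [x2 /existsP [y2 /and4P [x2U y2U x2y yy2]]].
    apply/forallP => z; apply/implyP => /andP [xz zy].
    rewrite inE; apply/existsP; exists x1; apply/existsP; exists y2.
    by rewrite x1U y2U (gle_trans x1x xz) (gle_trans zy yy2).
move=> J' HJ' TJ'; apply/subsetP => z; rewrite inE => /existsP [x /existsP [y /and4P [xU yU xz zy]]].
move: xU yU; rewrite !memU => /exists_inP [C CT xC] /exists_inP [D DT yD].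
case/and3P: HJ' => _ _ Hcv.
apply: (convex_rep Hcv _ _ xz zy).
  exact: (subsetP (TJ' _ CT)).
exact: (subsetP (TJ' _ DT)).
Qed.

End Join.

Section Comb.
Variables (m n : nat).
Implicit Types (I J : {set vert m n}).

Lemma Cov_prop I C : C \in Cov I -> is_interval C /\ I \proper C.
Proof. by rewrite inE => /and3P [? ? _]. Qed.

Lemma bigjoin_prop I (T : {set {set vert m n}}) : is_interval I -> T \subset Cov I -> T != set0 ->
  is_interval (bigjoin T) /\ (forall L, L \in T -> L \subset bigjoin T) /\
  (forall J', is_interval J' -> (forall L, L \in T -> L \subset J') -> bigjoin T \subset J').
Proof.
move=> HI TC Tn.
have H2 := epsilon_spec (inhabits (set0 : {set vert m n})) (fun J => is_interval J /\
  (forall L, L \in T -> L \subset J) /\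
  (forall J', is_interval J' -> (forall L, L \in T -> L \subset J') -> J \subset J')).
apply: H2.
have H : forall C, C \in T -> is_interval C /\ I \subset C.
  move=> C CT; case: (Cov_prop (subsetP TC _ CT)) => H1 H2; split => //; exact: proper_sub.
exists (hull T); exact: (hull_spec HI H Tn).
Qed.

Lemma bigjoin_subJ I (T : {set {set vert m n}}) J : is_interval I -> T \subset Cov I -> T != set0 ->
  is_interval J -> (bigjoin T \subset J) = [forall L in T, L \subset J].
Proof.
move=> HI TC Tn HJ; case: (bigjoin_prop HI TC Tn) => _ [Hsub Hmin].
apply/idP/forall_inP => [BJ L LT|H]; first exact: subset_trans (Hsub L LT) BJ.
by apply: Hmin.
Qed.

Lemma cover_ex I J : is_interval J -> I \proper J -> exists2 C, C \in Cov I & C \subset J.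
Proof.
move=> HJ IJ.
pose P := fun L : {set vert m n} => [&& is_interval L, I \proper L & L \subset J].
have PJ : P J by rewrite /P HJ IJ subxx.
case: (@arg_minnP _ J P (fun L => #|L|) PJ) => C /and3P [HC IC CJ] Hmin.
exists C => //; rewrite inE HC IC /=; apply/forallP => L.
apply/negP => /and3P [HL IL LC].
have := Hmin L; rewrite /P HL IL (subset_trans (proper_sub LC) CJ) => /(_ isT).
by rewrite leqNgt proper_card.
Qed.

Lemma comb I J : is_interval I -> is_interval J ->
  ((J == I) : nat)%:Z = ((I \subset J) : nat)%:Z +
    \sum_(S in powerset (Cov I) | S != set0) (-1) ^+ #|S| * ((bigjoin S \subset J) : nat)%:Z.
Proof.
move=> HI HJ.
pose A := [set C in Cov I | C \subset J].
have E : \sum_(S in powerset (Cov I) | S != set0) (-1) ^+ #|S| * ((bigjoin S \subset J) : nat)%:Z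
       = \sum_(S in powerset A | S != set0) (-1 : int) ^+ #|S|.
  rewrite big_mkcond [RHS]big_mkcond; apply: eq_bigr => S _.
  rewrite !powersetE.
  case: (boolP (S \subset Cov I)) => SC /=; last first.
    have -> : (S \subset A) = false.
      apply/negP => SA; case/negP: SC; apply: subset_trans SA _.
      by apply/subsetP => C; rewrite inE => /andP [].
    by [].
  case: (boolP (S != set0)) => Sn; rewrite ?andbF ?andbT //.
  rewrite (bigjoin_subJ HI SC Sn HJ).
  have -> : [forall L in S, L \subset J] = (S \subset A).
    apply/forall_inP/subsetP => [H L LS|H L LS].
      by rewrite inE (subsetP SC _ LS) H.
    by move: (H L LS); rewrite inE => /andP [].
  by case: (S \subset A); rewrite ?mulr1 ?mulr0.
rewrite E.
have E2 : \sum_(S in powerset A | S != set0) (-1 : int) ^+ #|S| =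
          \sum_(S in powerset A) (-1 : int) ^+ #|S| - 1.
  rewrite [X in _ = X - _](bigD1 set0) /=; last by rewrite powersetE sub0set.
  by rewrite cards0 expr0 addrAC subrr add0r.
rewrite E2 alt_sum.
have A0 : ((I \subset J) && (J != I)) = (A != set0).
  case: (boolP (I \subset J)) => IJ /=.
    case: eqP => [E3|ne] /=.
      apply/esym/negbTE; rewrite negbK; apply/eqP/setP => C; rewrite !inE E3.
      apply/negbTE/negP => /andP [CC CI].
      by case/and3P: CC => _; rewrite properE CI andbF.
    have IpJ : I \proper J by rewrite properEneq IJ andbT; apply/eqP => E3; apply: ne.
    case: (cover_ex HJ IpJ) => C CC CJ; apply/esym/set0Pn; exists C; by rewrite in_set CC CJ.
  apply/esym/negbTE; rewrite negbK; apply/eqP/setP => C; rewrite !inE.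
  apply/negbTE/negP => /andP [CC CJ]; case/and3P: CC => _ /proper_sub IC _.
  by case/negP: IJ; apply: subset_trans IC CJ.
have JI : (J == I) ==> (I \subset J) by apply/implyP => /eqP ->.
move: A0 JI; case: (I \subset J); case: (J == I) => //=; case: (A == set0) => //= _.
Qed.

End Comb.

Lemma sumz r (f : 'I_r -> nat) : ((\sum_i f i)%N)%:Z = \sum_i (f i)%:Z.
Proof. by apply: (big_morph Posz PoszD). Qed.

Section Final.
Variables (K : fieldType) (m n : nat).
Local Notation rep := (repd K m n).

Lemma dsum_restr (S : {set vert m n}) (M : rep) k (F : 'I_k -> rep) :
  is_dsum [set: vert m n] M F -> is_dsum S M F.
Proof.
case=> iota [pi [Hi [Hp Hx]]]; exists iota, pi.
split; first by move=> i x y _ _; apply: Hi; rewrite inE.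
split; first by move=> i x y _ _; apply: Hp; rewrite inE.
by move=> x _; apply: Hx; rewrite inE.
Qed.

Lemma iso_restr (S : {set vert m n}) (A B : rep) : is_iso [set: vert m n] A B -> is_iso S A B.
Proof.
case=> g [h [Hg [Hh H]]]; exists g, h.
split; first by move=> x y _ _; apply: Hg; rewrite inE.
split; first by move=> x y _ _; apply: Hh; rewrite inE.
by move=> x _; apply: H; rewrite inE.
Qed.

Lemma rep_restr (S : {set vert m n}) (M : rep) : is_rep [set: vert m n] M -> is_rep S M.
Proof.
case=> H1 H2; split; first by move=> x _; apply: H1; rewrite inE.
by move=> x y z _ _ _; apply: H2; rewrite inE.
Qed.

Variables (M : rep) (k' : nat) (F : 'I_k' -> rep) (J : 'I_k' -> {set vert m n}).
Hypothesis HM : is_rep [set: vert m n] M.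
Hypothesis Hd : is_dsum [set: vert m n] M F.
Hypothesis HJ : forall i, is_interval (J i).
Hypothesis HFJ : forall i, is_iso [set: vert m n] (F i) (VI K (J i)).

Lemma Phi_sumJ (S : {set vert m n}) (L : rep) x0 : rdim L x0 = 1%N -> x0 \in S ->
  Phi S L x0 M = (\sum_i Phi S L x0 (VI K (J i)))%N.
Proof.
move=> H1 Hx0; rewrite (dsum_Phi H1 Hx0 (dsum_restr S Hd)).
apply: eq_bigr => i _.
by rewrite (dsum_Phi H1 Hx0 (iso_dsum1 (iso_restr S (HFJ i)))) big_ord1.
Qed.

Lemma cmult_formula kk (K0 : {set vert m n}) : is_interval K0 ->
  cmult kk M K0 = (\sum_i (K0 \subset J i))%N.
Proof.
move=> HK0; have := HK0; case/and3P => /set0Pn [a0 a0K] HcK _.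
set S := ess kk K0.
pose x0 := src K0 a0.
have x0S : x0 \in S by apply: src_ess.
have x0K : x0 \in K0 by case: (src_prop a0K).
have H1 : rdim (VI K K0) x0 = 1%N by rewrite /= x0K.
have SK : S \subset K0 by apply: ess_sub.
have Hconn : forall x, x \in S -> x \in K0 -> connect (Rc S K0) x0 x.
  exact: conn_ess.
have HLrep : is_rep S (VI K K0).
  by apply: VI_rep => x y z _ yS _ _ _ _ _; apply: (subsetP SK).
rewrite /cmult (mult_Phi H1 x0S HLrep (VI_end Hconn) (rep_restr S HM)).
rewrite (Phi_sumJ H1 x0S); apply: eq_bigr => i _.
rewrite (Phi_E K x0S x0K Hconn _ SK).
by rewrite /S ess_subJ //; case/and3P: (HJ i).
Qed.

Lemma mult_formula (I : {set vert m n}) : is_interval I ->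
  mult [set: vert m n] M (VI K I) = (\sum_i (J i == I))%N.
Proof.
move=> HI; have := HI; case/and3P => /set0Pn [x0 x0I] _ _.
have H1 : rdim (VI K I) x0 = 1%N by rewrite /= x0I.
have Hx0 : x0 \in [set: vert m n] by rewrite inE.
rewrite (mult_Phi H1 Hx0 (VI_rep_T K HI) (VI_end_T HI x0I) HM).
rewrite (Phi_sumJ H1 Hx0); apply: eq_bigr => i _.
exact: Phi_T.
Qed.

End Final.

Unset Implicit Arguments.

Theorem mainTheorem11 (K : fieldType) (m n : nat) (Hm : (0 < m)%N) (Hn : (0 < n)%N)
  (M : repd K m n) (HM : is_rep setT M) (Hid : interval_decomposable M)
  (I : {set vert m n}) (HI : is_interval I) (k : ess_kind) :
  (mult setT M (VI K I))%:Z =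
    (cmult k M I)%:Z +
    \sum_(S in powerset (Cov I) | S != set0)
        (-1) ^+ #|S| * (cmult k M (bigjoin S))%:Z.
Proof.
case: Hid => k' [F [Hd HF]].
pose G i := constructive_indefinite_description _ (HF i).
pose J i := proj1_sig (G i).
have HJ i : is_interval (J i) by case: (proj2_sig (G i)).
have HFJ i : is_iso setT (F i) (VI K (J i)) by case: (proj2_sig (G i)).
rewrite (mult_formula HM Hd HJ HFJ HI) (cmult_formula HM Hd HJ HFJ k HI).
have E : \sum_(S in powerset (Cov I) | S != set0) (-1) ^+ #|S| * (cmult k M (bigjoin S))%:Z
   = \sum_(S in powerset (Cov I) | S != set0) \sum_i (-1) ^+ #|S| * ((bigjoin S \subset J i) : nat)%:Z.
  apply: eq_bigr => S /andP [SP Sn].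
  rewrite powersetE in SP.
  case: (bigjoin_prop HI SP Sn) => Hb _.
  by rewrite (cmult_formula HM Hd HJ HFJ k Hb) sumz big_distrr.
rewrite E exchange_big /= !sumz -big_split /=.
apply: eq_bigr => i _.
exact: comb.
Qed.
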